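(* For each $n\ge1$ there is a bijection $\varphi'$ from the set of plane trees with $n$ edges to $\mathfrak S_n(321)$ such that, for every such tree $T$ and $\pi=\varphi'(T)$: (1) the number of young leaves of $T$ equals the number of indices $i\in\{1,\dots,n-1\}$ such that both $\pi_i$ and $\pi_{i+1}$ are deficiencies of $\pi$, plus $1$ if $\pi_n<n$; (2) the number of old leaves of $T$ equals the number of weak excedances $\pi_i$ of $\pi$ that are not followed by another weak excedance (i.e. $i=n$, or $\pi_{i+1}$ is not a weak excedance).
   Context: A plane tree is a rooted tree in which the children of each vertex are linearly ordered. A leaf is a vertex with no children; the one-vertex tree has no leaves. A leaf is old if it is the leftmost child of its parent, young otherwise. $\mathfrak S_n(321)$ is the set of permutations $\pi=\pi_1\cdots\pi_n$ of $\{1,\dots,n\}$ having no indices $a<b<c$ with $\pi_a>\pi_b>\pi_c$. An entry $\pi_i$ is a weak excedance if $\pi_i\ge i$ and a deficiency if $\pi_i<i$. *)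

(* Defs.v *)
From mathcomp Require Import all_boot all_fingroup.
Set Implicit Arguments. Unset Strict Implicit. Unset Printing Implicit Defensive.

Inductive ptree : Type := Node of seq ptree.

Fixpoint edges (t : ptree) : nat :=
  let: Node ts := t in sumn (map (fun c => (edges c).+1) ts).

Definition is_leafb (t : ptree) : bool := let: Node ts := t in nilp ts.

(* Leaves are non-root vertices with no children (so the one-vertex tree has
   no leaves).  Old leaf: leftmost child of its parent; young leaf: otherwise. *)
Fixpoint old_leaves (t : ptree) : nat :=
  let: Node ts := t in
  (if ts is c :: _ then nat_of_bool (is_leafb c) else 0) + sumn (map old_leaves ts).

Fixpoint young_leaves (t : ptree) : nat :=
  let: Node ts := t in
  count is_leafb (behead ts) + sumn (map young_leaves ts).

(* Permutations of {1..n} are represented by 'S_n acting on {0..n-1}: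
   pi_{j+1} = (p j) + 1.  pv p j = value at 0-based position j (0 if j >= n). *)
Definition pv n (p : 'S_n) (j : nat) : nat :=
  nth 0 (map (fun i => val (p i)) (enum 'I_n)) j.

Definition avoids321 n (p : 'S_n) : bool :=
  [forall a : 'I_n, forall b : 'I_n, forall c : 'I_n,
     ((a < b) && (b < c)) ==> ~~ ((p b < p a) && (p c < p b))].

Definition wexc n (p : 'S_n) (j : nat) : bool := (j < n) && (j <= pv p j).
Definition defic n (p : 'S_n) (j : nat) : bool := (j < n) && (pv p j < j).

Definition stat_young n (p : 'S_n) : nat :=
  count (fun j => defic p j && defic p j.+1) (iota 0 n.-1)
  + nat_of_bool (pv p n.-1 < n.-1).

Definition stat_old n (p : 'S_n) : nat :=
  count (fun j => wexc p j && ~~ wexc p j.+1) (iota 0 n).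

(* Main.v *)
Require Import Defs.
From mathcomp Require Import all_boot all_fingroup zify.
Set Implicit Arguments. Unset Strict Implicit. Unset Printing Implicit Defensive.

Definition cP (P : pred nat) x := count P (iota 0 x).
Definition sel (P : pred nat) n r := nth 0 (filter P (iota 0 n)) r.

Lemma cP_S (P : pred nat) x : cP P x.+1 = cP P x + P x.
Proof. by rewrite /cP -addn1 iotaD count_cat /= addn0 add0n. Qed.

Lemma cP_mono (P : pred nat) x y : x <= y -> cP P x <= cP P y.
Proof.
move=> /subnKC <-; rewrite /cP iotaD count_cat; exact: leq_addr.
Qed.

Lemma cP_le (P : pred nat) x : cP P x <= x.
Proof. by rewrite /cP -[X in _ <= X](size_iota 0 x) count_size. Qed.

Lemma cP_lt (P : pred nat) x y : x < y -> P x -> cP P x < cP P y.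
Proof.
move=> lxy Px; apply: (@leq_trans (cP P x.+1)); last exact: cP_mono.
by rewrite cP_S Px addn1.
Qed.

Lemma size_fil (P : pred nat) n : size (filter P (iota 0 n)) = cP P n.
Proof. by rewrite size_filter. Qed.

Lemma sel_cP n (P : pred nat) x : x < n -> P x -> sel P n (cP P x) = x.
Proof.
elim: n => // n IH; rewrite ltnS leq_eqVlt => /orP [/eqP -> | lxn] Px.
  by rewrite /sel -addn1 iotaD filter_cat nth_cat size_fil ltnn subnn /= Px.
rewrite /sel -addn1 iotaD filter_cat nth_cat size_fil cP_lt //.
exact: IH.
Qed.

Lemma sel_prop n (P : pred nat) r : r < cP P n ->
  [/\ sel P n r < n, P (sel P n r) & cP P (sel P n r) = r].
Proof.
move=> hr.
have hm : sel P n r \in filter P (iota 0 n) by rewrite mem_nth // size_fil.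
move: hm; rewrite mem_filter mem_iota add0n => /andP [Py yn].
split => //.
have u : uniq (filter P (iota 0 n)) by rewrite filter_uniq // iota_uniq.
have h1 := sel_cP yn Py.
have h2 : cP P (sel P n r) < size (filter P (iota 0 n)) by rewrite size_fil cP_lt.
apply/eqP; rewrite -(nth_uniq 0 h2 _ u) ?size_fil //.
by rewrite -/(sel P n _) h1.
Qed.

Lemma sel_lt n (P : pred nat) r x : r < cP P n -> (sel P n r < x) = (r < cP P x).
Proof.
move=> /sel_prop [yn Py cy].
case: (ltnP (sel P n r) x) => h.
  by apply/esym; rewrite -[X in X < _]cy; apply: cP_lt.
by apply/esym/negbTE; rewrite -leqNgt -[X in _ <= X]cy; apply: cP_mono.
Qed.

Lemma cP_C (P : pred nat) x : cP (predC P) x = x - cP P x.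
Proof. rewrite /cP -{2}(size_iota 0 x) -(count_predC P (iota 0 x)). lia. Qed.

Lemma card_count n (Q : pred nat) : #|[set v : 'I_n | Q v]| = count Q (iota 0 n).
Proof.
rewrite -val_enum_ord count_map cardsE cardE /enum_mem size_filter /=.
by rewrite filter_predT; apply: eq_count => i.
Qed.

Lemma cP_card n (P : pred nat) x : x <= n ->
  cP P x = #|[set v : 'I_n | P v && (v < x)]|.
Proof.
move=> hx; rewrite (card_count n (fun v => P v && (v < x))) /cP -(subnKC hx) iotaD count_cat add0n.
rewrite [count _ (iota x _)](eq_in_count (a2 := pred0)); last first.
  by move=> v; rewrite mem_iota => /andP [h _] /=; rewrite ltnNge h andbF.
rewrite count_pred0 addn0; apply: eq_in_count => v; rewrite mem_iota /=.
by rewrite add0n => h; rewrite h andbT.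
Qed.

Lemma card_lt n m : m <= n -> #|[set v : 'I_n | v < m]| = m.
Proof.
move=> h; have E := cP_card (fun _ => true) h; rewrite /cP count_predT size_iota in E.
by rewrite [RHS]E; apply: eq_card => v; rewrite !inE.
Qed.

Definition build n (w vm : pred nat) j :=
  if w j then sel vm n (cP w j) else sel (predC vm) n (j - cP w j).

Definition dyck n (w vm : pred nat) :=
  cP w n = cP vm n /\ forall j, j < n -> cP vm j < cP w j.+1.

Section Build.
Variables (n : nat) (w vm : pred nat).
Hypothesis (hd : dyck n w vm).

Lemma cwD j : j < n -> ~~ w j -> j - cP w j < cP (predC vm) n.
Proof.
move=> jn nw; case: hd => E _.
rewrite cP_C -E.
have h : cP (predC w) j < cP (predC w) n by apply: cP_lt.
by rewrite !cP_C in h.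
Qed.

Lemma cwW j : j < n -> w j -> cP w j < cP vm n.
Proof. by move=> jn wj; case: hd => <- _; apply: cP_lt. Qed.

Lemma build_prop j : j < n ->
  [/\ build n w vm j < n, vm (build n w vm j) = w j &
      if w j then cP vm (build n w vm j) = cP w j
      else cP (predC vm) (build n w vm j) = j - cP w j].
Proof.
move=> jn; rewrite /build; case wj: (w j).
  by case: (sel_prop (cwW jn wj)).
have nw : ~~ w j by rewrite wj.
case: (sel_prop (cwD jn nw)) => a b c; split => //.
by apply/negbTE.
Qed.

Lemma build_lt j : j < n -> build n w vm j < n.
Proof. by case/build_prop. Qed.

Lemma build_inj i j : i < n -> j < n -> build n w vm i = build n w vm j -> i = j.
Proof.
move=> iN jN eb.
have [_ vi ci] := build_prop iN; have [_ vj cj] := build_prop jN.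
rewrite eb in vi ci.
case wi: (w i); case wj: (w j); rewrite ?wi ?wj in ci cj vi vj; rewrite ?vi in vj => //.
- rewrite ci in cj.
  case: (ltngtP i j) => // h; [have := cP_lt h wi | have := cP_lt h wj]; lia.
- rewrite ci in cj.
  have ci' : i - cP w i = cP (predC w) i by rewrite cP_C.
  have cj' : j - cP w j = cP (predC w) j by rewrite cP_C.
  have nwi : (predC w) i by rewrite /= wi.
  have nwj : (predC w) j by rewrite /= wj.
  case: (ltngtP i j) => // h; [have := cP_lt h nwi | have := cP_lt h nwj]; lia.
Qed.

Lemma build_wexc j : j < n -> (j <= build n w vm j) = w j.
Proof.
move=> jn; have dy := (proj2 hd) j jn; rewrite cP_S in dy.
rewrite /build; case wj: (w j).
  by rewrite leqNgt (sel_lt _ (cwW jn wj)); rewrite wj in dy; apply/negP; lia.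
have nw : ~~ w j by rewrite wj.
rewrite leqNgt (sel_lt _ (cwD jn nw)) cP_C; rewrite wj in dy.
have := cP_le vm j; have := cP_le w j => h1 h2.
have H : j - cP w j < j - cP vm j by lia.
by rewrite H.
Qed.

Lemma build_monoW i j : i < j -> j < n -> w i -> w j -> build n w vm i < build n w vm j.
Proof.
move=> ij jn wi wj; have iN : i < n by apply: ltn_trans ij jn.
case: (build_prop jn); rewrite wj => _ _ cj.
rewrite {1}/build wi (sel_lt _ (cwW iN wi)) cj; exact: cP_lt.
Qed.

Lemma build_monoD i j : i < j -> j < n -> ~~ w i -> ~~ w j ->
  build n w vm i < build n w vm j.
Proof.
move=> ij jn wi wj; have iN : i < n by apply: ltn_trans ij jn.
case: (build_prop jn); rewrite (negbTE wj) => _ _ cj.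
rewrite {1}/build (negbTE wi) (sel_lt _ (cwD iN wi)) cj -!cP_C; exact: cP_lt.
Qed.

Definition bfun (i : 'I_n) : 'I_n := insubd i (build n w vm i).

Lemma bfunE i : val (bfun i) = build n w vm i.
Proof. by rewrite /bfun val_insubd build_lt. Qed.

Lemma bfun_inj : injective bfun.
Proof.
move=> i j /(congr1 val); rewrite !bfunE => /build_inj h; apply: val_inj; exact: h.
Qed.

Definition bperm : 'S_n := perm bfun_inj.

Lemma bpermE i : val (bperm i) = build n w vm i.
Proof. by rewrite permE bfunE. Qed.

End Build.

Lemma pvE n (p : 'S_n) (i : 'I_n) : pv p i = p i.
Proof. by rewrite /pv (nth_map i) ?size_enum_ord // nth_ord_enum. Qed.

Lemma wexcE n (p : 'S_n) (i : 'I_n) : wexc p i = (i <= p i).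
Proof. by rewrite /wexc pvE ltn_ord. Qed.

Lemma bperm_wexc n w vm (hd : dyck n w vm) j : j < n -> wexc (bperm hd) j = w j.
Proof.
move=> jn; have -> : j = val (Ordinal jn) by [].
by rewrite wexcE bpermE build_wexc.
Qed.

Lemma bperm_avoid n w vm (hd : dyck n w vm) : avoids321 (bperm hd).
Proof.
apply/forallP => a; apply/forallP => b; apply/forallP => c; apply/implyP => /andP [ab bc].
rewrite !bpermE.
have cn := ltn_ord c; have bn := ltn_ord b; have an := ltn_ord a.
have ac := ltn_trans ab bc.
apply/negP => /andP [h1 h2].
case wa: (w a); case wb: (w b); case wc: (w c).
- by have := build_monoW hd ab bn wa wb; lia.
- by have := build_monoW hd ab bn wa wb; lia.
- by have := build_monoW hd ac cn wa wc; lia.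
- by have := build_monoD hd bc cn (negbT wb) (negbT wc); lia.
- by have := build_monoW hd bc cn wb wc; lia.
- by have := build_monoD hd ac cn (negbT wa) (negbT wc); lia.
- by have := build_monoD hd ab bn (negbT wa) (negbT wb); lia.
- by have := build_monoD hd ab bn (negbT wa) (negbT wb); lia.
Qed.

Section Uniq.
Variables (n : nat) (p : 'S_n).
Hypothesis (av : avoids321 p).

Lemma avP (a b c : 'I_n) : a < b -> b < c -> p b < p a -> p c < p b -> False.
Proof.
move=> ab bc h1 h2.
move: av => /forallP /(_ a) /forallP /(_ b) /forallP /(_ c) /implyP.
by rewrite ab bc h1 h2 => /(_ isT).
Qed.

Lemma pneq (i j : 'I_n) : i != j -> val (p i) != val (p j).
Proof.
by move=> h; apply/negP => /eqP /val_inj /perm_inj /eqP; apply/negP.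
Qed.

Lemma monoW (i j : 'I_n) : i < j -> j <= p j -> p i < p j.
Proof.
move=> ij jw; rewrite ltnNge leq_eqVlt negb_or; apply/andP; split.
  by apply: pneq; rewrite eq_sym neq_ltn ij.
apply/negP => lt.
have H : forall k : 'I_n, p k < p j -> k < j.
  move=> k hk; case: (ltngtP k j) => // h.
  - by exfalso; apply: (avP ij h lt hk).
  - by move/val_inj: h => h; rewrite h ltnn in hk.
pose A := [set k : 'I_n | p k < p j].
have cA : #|A| = p j.
  have -> : A = p @^-1: [set v : 'I_n | v < p j] by apply/setP => k; rewrite !inE.
  by rewrite card_preimset ?card_lt //; [apply: ltnW; apply: ltn_ord | apply: perm_inj].
have sub : A \subset [set k : 'I_n | k < j] :\ i.
  apply/subsetP => k; rewrite !inE => hk; rewrite (H k hk) andbT.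
  by apply/negP => /eqP ki; rewrite ki ltnNge ltnW in hk.
have := subset_leq_card sub.
have := cardsD1 i [set k : 'I_n | k < j]; rewrite inE ij card_lt; last exact: ltnW (ltn_ord j).
rewrite cA; lia.
Qed.

Lemma monoD (i j : 'I_n) : i < j -> p i < i -> p j < j -> p i < p j.
Proof.
move=> ij di dj; rewrite ltnNge leq_eqVlt negb_or; apply/andP; split.
  by apply: pneq; rewrite eq_sym neq_ltn ij.
apply/negP => lt.
have H : forall k : 'I_n, p i < p k -> i < k.
  move=> k hk; case: (ltngtP k i) => // h.
  - by exfalso; apply: (avP h ij hk lt).
  - by move/val_inj: h => h; rewrite h ltnn in hk.
pose A := [set k : 'I_n | p i < p k].
have cA : #|A| = n - (p i).+1.
  have -> : A = p @^-1: (~: [set v : 'I_n | v < (p i).+1]).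
    by apply/setP => k; rewrite !inE -leqNgt.
  rewrite card_preimset; last exact: perm_inj.
  have := cardsC [set v : 'I_n | v < (p i).+1]; rewrite card_ord card_lt //.
  lia.
have sub : A \subset ~: [set k : 'I_n | k < i.+1] :\ j.
  apply/subsetP => k; rewrite !inE => hk; rewrite -leqNgt (H k hk) andbT.
  by apply/negP => /eqP kj; rewrite kj ltnNge ltnW in hk.
have := subset_leq_card sub.
have := cardsD1 j (~: [set k : 'I_n | k < i.+1]); rewrite !inE -leqNgt ij cA.
have := cardsC [set v : 'I_n | v < i.+1]; rewrite card_ord card_lt //.
have := ltn_ord j; have := ltn_ord i; lia.
Qed.

Definition wP : pred nat := fun j => wexc p j.
Definition vP : pred nat := fun v => [exists i : 'I_n, wexc p i && (val (p i) == v)].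

Lemma vP_p (k : 'I_n) : vP (p k) = wexc p k.
Proof.
apply/existsP/idP => [[i /andP [wi /eqP e]] | wk]; last by exists k; rewrite wk eqxx.
by move/val_inj/perm_inj: e => <-.
Qed.

Lemma monoW2 (i k : 'I_n) : i <= p i -> k <= p k -> (p k < p i) = (k < i).
Proof.
move=> wi wk; case: (ltngtP k i) => h.
- by rewrite monoW.
- by apply/negbTE; rewrite -leqNgt ltnW // monoW.
- by move/val_inj: h => ->; rewrite ltnn.
Qed.

Lemma monoD2 (i k : 'I_n) : p i < i -> p k < k -> (p k < p i) = (k < i).
Proof.
move=> wi wk; case: (ltngtP k i) => h.
- by rewrite monoD.
- by apply/negbTE; rewrite -leqNgt ltnW // monoD.
- by move/val_inj: h => ->; rewrite ltnn.
Qed.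



Lemma uniq_build (i : 'I_n) : val (p i) = build n wP vP i.
Proof.
have pin : p i <= n by apply: ltnW.
have iin : (i : nat) <= n by apply: ltnW.
rewrite /build; case wi: (wP i).
  have hv : vP (p i) by rewrite vP_p.
  apply: (etrans (esym (sel_cP (ltn_ord (p i)) hv))); congr sel.
  rewrite (cP_card vP pin) (cP_card wP iin).
  rewrite -(card_preimset _ (@perm_inj _ p)); apply: eq_card => k; rewrite !inE vP_p.
  rewrite /wP; case wk: (wexc p k) => //=; apply: monoW2.
    by move: wi; rewrite /wP wexcE.
  by move: wk; rewrite wexcE.
have hv : (predC vP) (p i) by rewrite /= vP_p; move: wi; rewrite /wP => ->.
apply: (etrans (esym (sel_cP (ltn_ord (p i)) hv))); congr sel.
rewrite -cP_C (cP_card (predC vP) pin) (cP_card (predC wP) iin).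
rewrite -(card_preimset _ (@perm_inj _ p)); apply: eq_card => k; rewrite !inE vP_p.
rewrite /wP; case wk: (wexc p k) => //=; apply: monoD2.
  by move: wi; rewrite /wP wexcE ltnNge => ->.
by move: wk; rewrite wexcE ltnNge => ->.
Qed.

End Uniq.

Lemma dyck_p n (p : 'S_n) : avoids321 p -> dyck n (wP p) (vP p).
Proof.
move=> av.
have E : cP (wP p) n = cP (vP p) n.
  rewrite (cP_card (vP p) (leqnn n)) (cP_card (wP p) (leqnn n)).
  rewrite -[RHS](card_preimset _ (@perm_inj _ p)); apply: eq_card => k; rewrite !inE.
  by rewrite !ltn_ord vP_p.
split => // j jn.
have ub := uniq_build av (Ordinal jn); rewrite /= /build in ub.
rewrite cP_S; case wj: (wP p j).
  have r1 : cP (wP p) j < cP (vP p) n by rewrite -E; apply: cP_lt.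
  have : j <= p (Ordinal jn) by move: wj; rewrite /wP -[j]/(val (Ordinal jn)) wexcE.
  rewrite ub wj leqNgt (sel_lt _ r1); lia.
have nw : (predC (wP p)) j by rewrite /= wj.
have r1 : j - cP (wP p) j < cP (predC (vP p)) n.
  rewrite cP_C -E.
  have h : cP (predC (wP p)) j < cP (predC (wP p)) n by apply: cP_lt.
  by rewrite !cP_C in h.
have : p (Ordinal jn) < j.
  by move: wj; rewrite /wP -[j]/(val (Ordinal jn)) wexcE ltnNge => ->.
rewrite ub wj (sel_lt _ r1) cP_C.
have := cP_le (vP p) j; have := cP_le (wP p) j; lia.
Qed.

Definition S (D : seq nat) t := sumn (take t D).
Definition wD (D : seq nat) : pred nat := fun j => 0 < nth 0 D j.
Definition vD n (D : seq nat) : pred nat :=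
  fun v => has (fun i => (0 < nth 0 D i) && (S D i.+1 == v.+1)) (iota 0 n).
Definition valid n D := S D n = n /\ forall t, t <= n -> t <= S D t.

Lemma S_S D t : S D t.+1 = S D t + nth 0 D t.
Proof.
rewrite /S; case: (ltnP t (size D)) => h.
  by rewrite (take_nth 0 h) sumn_rcons.
by rewrite nth_default // !take_oversize ?addn0 //; apply: leqW.
Qed.

Lemma S_mono D t u : t <= u -> S D t <= S D u.
Proof.
move=> /subnKC <-; elim: (u - t) => [|k IH]; first by rewrite addn0.
by rewrite addnS S_S; apply: leq_trans IH (leq_addr _ _).
Qed.

Section Valid.
Variables (n : nat) (D : seq nat).
Hypothesis (hv : valid n D).

Lemma S_le t : t <= n -> S D t <= n.
Proof. by move=> h; case: hv => <- _; apply: S_mono. Qed.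

Lemma S_pos_inj i j : i < n -> j < n -> wD D i -> wD D j -> S D i.+1 = S D j.+1 -> i = j.
Proof.
move=> iN jN wi wj e.
case: (ltngtP i j) => // h.
  have := S_mono D h; have := S_S D j; rewrite /wD in wj; lia.
have := S_mono D h; have := S_S D i; rewrite /wD in wi; lia.
Qed.

Definition fS (i : 'I_n) : 'I_n := insubd i (S D i.+1).-1.

Lemma fSE (i : 'I_n) : wD D i -> (fS i : nat).+1 = S D i.+1.
Proof.
move=> wi; have h1 := (proj2 hv) i.+1 (ltn_ord i); have h2 := S_le (ltn_ord i).
by rewrite /fS val_insubd; case: ifP => h; lia.
Qed.

Lemma img_card (Q : pred nat) :
  #|[set v : 'I_n | vD n D v && Q v.+1]| = #|[set i : 'I_n | wD D i && Q (S D i.+1)]|.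
Proof.
rewrite -[RHS](card_in_imset (f := fS)); last first.
  move=> i j; rewrite !inE => /andP [wi _] /andP [wj _] /(congr1 val) e.
  apply: val_inj; apply: (S_pos_inj (ltn_ord i) (ltn_ord j) wi wj).
  by rewrite -(fSE wi) -(fSE wj) /= e.
apply: eq_card => v; rewrite inE; apply/andP/imsetP.
  move=> [/hasP [i]]; rewrite mem_iota add0n => /andP [_ iN] /andP [wi /eqP e] qv.
  exists (Ordinal iN); first by rewrite inE /wD /= wi e qv.
  by apply: val_inj; apply: succn_inj; rewrite fSE //= e.
move=> [i]; rewrite inE => /andP [wi qi] ->; split; last by rewrite fSE.
apply/hasP; exists (val i); first by rewrite mem_iota ltn_ord.
rewrite fSE //; apply/andP; split => //.
Qed.

Lemma last_pos j : j < n -> exists2 i, i <= j & wD D i && (S D i.+1 == S D j.+1).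
Proof.
elim: j => [|j IH] jn.
  exists 0 => //; rewrite eqxx andbT /wD.
  have := (proj2 hv) 1 jn; rewrite S_S /S take0 /=; lia.
case wj: (wD D j.+1); first by exists j.+1 => //; rewrite wj eqxx.
have [i ij /andP [wi /eqP e]] := IH (ltnW jn).
exists i; first by apply: leqW.
rewrite wi (S_S D j.+1) e /=; move: wj; rewrite /wD; case: (nth 0 D j.+1) => //= _.
by rewrite addn0.
Qed.

Lemma dyck_D : dyck n (wD D) (vD n D).
Proof.
split.
  rewrite (cP_card (vD n D) (leqnn n)) (cP_card (wD D) (leqnn n)).
  have := img_card predT; rewrite (@eq_card _ _ [set v : 'I_n | vD n D v && (v < n)]).
    by move=> ->; apply: eq_card => i; rewrite !inE ltn_ord.
  by move=> v; rewrite !inE ltn_ord.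
move=> j jn.
rewrite (cP_card (vD n D) (ltnW jn)) (cP_card (wD D) jn).
rewrite (@eq_card _ _ [set v : 'I_n | vD n D v && (fun x => x <= j) v.+1]); last first.
  by move=> v; rewrite !inE.
rewrite (img_card (fun x => x <= j)); apply: proper_card; apply/properP; split.
  apply/subsetP => i; rewrite !inE => /andP [-> h] /=.
  have := (proj2 hv) i.+1 (ltn_ord i); lia.
have [i ij /andP [wi /eqP e]] := last_pos jn.
have iN : i < n by apply: leq_ltn_trans ij jn.
exists (Ordinal iN); first by rewrite !inE wi /= ltnS.
rewrite !inE wi /= e -ltnNge; exact: (proj2 hv) j.+1 jn.
Qed.

End Valid.

Lemma vD_char n D j v : valid n D -> j < n -> wD D j -> v < n -> vD n D v ->
  S D j < v.+1 -> S D j.+1 <= v.+1.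
Proof.
move=> hv jn wj vn /hasP [i]; rewrite mem_iota add0n => /andP [_ iN] /andP [wi /eqP e] lt.
case: (ltnP i j) => h.
  by have := S_mono D h; lia.
rewrite -e; exact: S_mono.
Qed.

Lemma vD_self n D j : valid n D -> j < n -> wD D j ->
  [/\ (S D j.+1).-1 < n, vD n D (S D j.+1).-1 & S D j < S D j.+1].
Proof.
move=> hv jn wj; have h1 := (proj2 hv) j.+1 jn; have h2 := S_le hv jn.
have h3 : S D j < S D j.+1 by rewrite S_S; move: wj; rewrite /wD; lia.
split => //; first lia.
apply/hasP; exists j; first by rewrite mem_iota.
by move: wj; rewrite /wD => ->; apply/eqP; lia.
Qed.

Lemma S_det n D1 D2 : valid n D1 -> valid n D2 ->
  (forall j, j < n -> wD D1 j = wD D2 j) -> (forall v, v < n -> vD n D1 v = vD n D2 v) ->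
  forall t, t <= n -> S D1 t = S D2 t.
Proof.
move=> h1 h2 ew ev; elim => [|t IH] tn; first by rewrite /S !take0.
have tn' : t < n by [].
have e := IH (ltnW tn).
case w1: (wD D1 t).
  have w2 : wD D2 t by rewrite -ew.
  have [a1 b1 c1] := vD_self h1 tn' w1.
  have [a2 b2 c2] := vD_self h2 tn' w2.
  have b1' : vD n D2 (S D1 t.+1).-1 by rewrite -ev.
  have b2' : vD n D1 (S D2 t.+1).-1 by rewrite ev.
  have l1 := vD_char h2 tn' w2 a1 b1' ltac:(lia).
  have l2 := vD_char h1 tn' w1 a2 b2' ltac:(lia).
  lia.
have w2 : wD D2 t = false by rewrite -ew.
rewrite !S_S e; move: w1 w2; rewrite /wD; lia.
Qed.

Lemma cP_ext (w1 w2 : pred nat) x : (forall y, y < x -> w1 y = w2 y) -> cP w1 x = cP w2 x.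
Proof. by move=> h; apply: eq_in_count => y; rewrite mem_iota => /andP [_ ]; rewrite add0n => /h. Qed.

Lemma sel_ext (v1 v2 : pred nat) n r : (forall y, y < n -> v1 y = v2 y) -> sel v1 n r = sel v2 n r.
Proof.
move=> h; rewrite /sel (@eq_in_filter _ v1 v2) // => y; rewrite mem_iota add0n => /andP [_]; exact: h.
Qed.

Lemma build_ext n (w1 w2 vm1 vm2 : pred nat) j :
  (forall x, x < n -> w1 x = w2 x) -> (forall x, x < n -> vm1 x = vm2 x) -> j < n ->
  build n w1 vm1 j = build n w2 vm2 j.
Proof.
move=> hw hv jn; rewrite /build (hw _ jn) (cP_ext (w2 := w2)); last first.
  by move=> y yj; apply: hw; apply: ltn_trans yj jn.
rewrite (@sel_ext vm1 vm2 n _ hv) (@sel_ext (predC vm1) (predC vm2)) //.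
by move=> y yn /=; rewrite hv.
Qed.

Lemma vm_recover n w vm (hd : dyck n w vm) v : v < n ->
  vm v = [exists i : 'I_n, w i && (build n w vm i == v)].
Proof.
move=> vn; apply/idP/existsP.
  move=> vv; have r : cP vm v < cP w n by case: hd => -> _; apply: cP_lt.
  have [iN wi ci] := sel_prop r.
  exists (Ordinal iN); rewrite /= wi /=; apply/eqP; rewrite /build wi ci; exact: sel_cP.
move=> [i /andP [wi /eqP <-]]; have [_ -> _] := build_prop hd (ltn_ord i); exact: wi.
Qed.

Section Dfd.
Variables (n : nat) (w vm : pred nat).
Hypothesis (hd : dyck n w vm) (n0 : 0 < n).

Definition Tf j := if cP w j is r.+1 then (sel vm n r).+1 else 0.
Definition Dseq := mkseq (fun j => Tf j.+1 - Tf j) n ++ [:: 0].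

Lemma Tf_w j : w j -> Tf j.+1 = (sel vm n (cP w j)).+1.
Proof. by move=> wj; rewrite /Tf cP_S wj addn1. Qed.

Lemma Tf_step j : j < n -> if w j then Tf j < Tf j.+1 else Tf j.+1 == Tf j.
Proof.
move=> jn; case wj: (w j); last by rewrite /Tf cP_S wj addn0 eqxx.
rewrite Tf_w //.
have r1 : cP w j < cP vm n by case: hd => <- _; apply: cP_lt.
rewrite /Tf; case e: (cP w j) => [|r] //; rewrite e in r1.
have r0 : r < cP vm n by apply: ltn_trans r1.
rewrite ltnS (sel_lt _ r0); have [_ _ ->] := sel_prop r1; done.
Qed.

Lemma Tf_le j : j < n -> Tf j <= Tf j.+1.
Proof. by move=> jn; have := Tf_step jn; case: (w j) => [/ltnW|/eqP->]. Qed.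

Lemma nth_Dseq j : j < n -> nth 0 Dseq j = Tf j.+1 - Tf j.
Proof. by move=> jn; rewrite /Dseq nth_cat size_mkseq jn nth_mkseq. Qed.

Lemma nth_Dseq_n : nth 0 Dseq n = 0.
Proof. by rewrite /Dseq nth_cat size_mkseq ltnn subnn. Qed.

Lemma size_Dseq : size Dseq = n.+1.
Proof. by rewrite size_cat size_mkseq addn1. Qed.

Lemma S_Dseq t : t <= n -> S Dseq t = Tf t.
Proof.
elim: t => [|t IH] tn; first by rewrite /S take0 /Tf /cP.
rewrite S_S IH ?(ltnW tn) // nth_Dseq //; have := Tf_le tn; lia.
Qed.

Lemma wD_Dseq j : j < n -> wD Dseq j = w j.
Proof.
move=> jn; rewrite /wD nth_Dseq //; have := Tf_step jn.
case: (w j) => [h|/eqP->]; lia.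
Qed.

Lemma valid_Dseq : valid n Dseq.
Proof.
case: hd => E Dy; split.
  rewrite S_Dseq //.
  have nn : n.-1 < n by rewrite prednK //.
  have dn := Dy n.-1 nn; rewrite prednK // in dn.
  have vl : vm n.-1 by move: dn; rewrite E -{2}(prednK n0) cP_S; case: (vm n.-1) => //; lia.
  rewrite /Tf E -{1}(prednK n0) cP_S vl addn1 sel_cP ?prednK //.
case=> [|j] jn; first by [].
rewrite S_Dseq //; have dj := Dy j jn.
have r1 : cP w j.+1 <= cP vm n by case: hd => <- _; apply: cP_mono.
rewrite /Tf; case e: (cP w j.+1) => [|r]; first by rewrite e in dj.
rewrite e in dj r1; rewrite ltnS leqNgt (sel_lt _ r1); lia.
Qed.

Lemma vD_Dseq v : v < n -> vD n Dseq v = vm v.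
Proof.
case: hd => E Dy vn; apply/hasP/idP.
  move=> [i]; rewrite mem_iota add0n => /andP [_ iN] /andP [pi /eqP e].
  have wi : w i by rewrite -wD_Dseq.
  rewrite S_Dseq // Tf_w // in e; case: e => <-.
  have r : cP w i < cP vm n by rewrite -E; apply: cP_lt.
  by case: (sel_prop r).
move=> vv; have r : cP vm v < cP w n by rewrite E; apply: cP_lt.
have [iN wi ci] := sel_prop r.
exists (sel w n (cP vm v)); first by rewrite mem_iota.
have := wD_Dseq iN; rewrite /wD => ->; rewrite wi /=.
by rewrite S_Dseq // Tf_w // ci sel_cP.
Qed.

End Dfd.

Fixpoint pre (t : ptree) : seq nat :=
  let: Node ts := t in size ts :: flatten (map pre ts).

Definition FF ts := flatten (map pre ts).

Section PInd.
Variable P : ptree -> Prop.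
Hypothesis HN : forall ts, (forall c, List.In c ts -> P c) -> P (Node ts).
Fixpoint pind t : P t :=
  match t with
  | Node ts => HN ((fix F (l : seq ptree) : forall c, List.In c l -> P c :=
       match l return forall c, List.In c l -> P c with
       | [::] => fun c (h : List.In c [::]) => match h with end
       | c0 :: l' => fun c h => match h with
                     | or_introl e => eq_ind c0 P (pind c0) c e
                     | or_intror h' => F l' c h'
                     end
       end) ts)
  end.
End PInd.

Lemma map_In A B (f g : A -> B) (l : seq A) : (forall c, List.In c l -> f c = g c) -> map f l = map g l.
Proof.
elim: l => //= a l IH h; rewrite h; last by left.
by rewrite IH // => c hc; apply: h; right.
Qed.

Lemma pre_edges t : size (pre t) = (edges t).+1 /\ sumn (pre t) = edges t.
Proof.
elim/pind: t => ts IH /=.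
have e1 : map (fun c => size (pre c)) ts = map (fun c => (edges c).+1) ts.
  by apply: map_In => c /IH [].
have e2 : map (fun c => sumn (pre c)) ts = map edges ts.
  by apply: map_In => c /IH [].
split.
  by rewrite size_flatten /shape -map_comp; congr _.+1; rewrite -e1.
rewrite sumn_flatten -map_comp /comp.
have -> : map (fun x => sumn (pre x)) ts = map edges ts by [].
elim: {IH e1 e2} ts => //= c ts IH; rewrite -IH; lia.
Qed.

Definition code k s := sumn s + k = size s /\ forall t, t < size s -> t < S s t + k.

Lemma code_nil : code 0 [::].
Proof. by split => // t. Qed.

Lemma S_cons a s t : S (a :: s) t.+1 = a + S s t.
Proof. by []. Qed.

Lemma code_cons m F : code m F -> code 1 (m :: F).
Proof.
move=> [h1 h2]; split; first by rewrite /= -h1; lia.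
case=> [|t] //= ht; have := h2 t ht; rewrite S_cons; lia.
Qed.

Lemma code_cat k l A B : code k A -> code l B -> code (k + l) (A ++ B).
Proof.
move=> [a1 a2] [b1 b2]; split; first by rewrite sumn_cat size_cat; lia.
move=> t; rewrite size_cat => ht; rewrite /S take_cat.
case: (ltnP t (size A)) => h.
  by have := a2 t h; rewrite /S; lia.
rewrite sumn_cat; have := b2 (t - size A); rewrite /S; lia.
Qed.

Lemma pre_code t : code 1 (pre t).
Proof.
elim/pind: t => ts IH /=; apply: code_cons.
elim: ts IH => [|c ts IHl] IH; first exact: code_nil.
rewrite /= -add1n; apply: code_cat; first by apply: IH; left.
by apply: IHl => c' h; apply: IH; right.
Qed.

Lemma code_forest s : forall k, code k s -> exists ts, size ts = k /\ FF ts = s.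
Proof.
elim: s => [|d s IH] k [h1 h2].
  by exists [::]; move: h1 => /= h; split => //; lia.
have k1 : 0 < k by have := h2 0 isT; rewrite /S take0.
have : code (k.-1 + d) s.
  split; first by move: h1 => /=; lia.
  move=> t ht; have := h2 t.+1 ht; rewrite S_cons; lia.
move=> /IH [fs [sz e]].
exists (Node (take d fs) :: drop d fs); split.
  rewrite /= size_drop sz; lia.
rewrite /FF /= -e size_take sz.
have -> : (if d < k.-1 + d then d else k.-1 + d) = d by case: ifP => //; lia.
by rewrite -flatten_cat -map_cat cat_take_drop.
Qed.

Lemma code_tree s : code 1 s -> exists T, pre T = s.
Proof.
move=> /code_forest [[|T [|T' ts]] [//= _ e]].
by exists T; rewrite -e /FF /= cats0.
Qed.

Lemma pre_inj_gen t1 : forall t2 s1 s2, pre t1 ++ s1 = pre t2 ++ s2 -> t1 = t2 /\ s1 = s2.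
Proof.
elim/pind: t1 => ts1 IH [ts2] s1 s2 /= [esz e].
suff : ts1 = ts2 /\ s1 = s2 by case=> -> ->.
elim: ts1 ts2 esz s1 s2 e IH => [|c ts IHl] [|c' ts2] //= esz s1 s2 e IH.
rewrite -!catA in e; have [ec e'] := IH c (or_introl erefl) _ _ _ e.
rewrite ec in IH *.
have [-> ->] := IHl ts2 ltac:(lia) s1 s2 e' (fun c h => IH c (or_intror h)).
by [].
Qed.

Lemma pre_inj t1 t2 : pre t1 = pre t2 -> t1 = t2.
Proof. by move=> e; apply: (proj1 (@pre_inj_gen t1 t2 [::] [::] _)); rewrite !cats0. Qed.

Fixpoint pc (f : nat -> nat -> bool) (s : seq nat) : nat :=
  match s with
  | a :: ((b :: _) as s') => f a b + pc f s'
  | _ => 0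
  end.

Lemma pc_cat f a A B :
  pc f ((a :: A) ++ B) = pc f (a :: A) + (if B is b :: _ then f (last a A) b else 0) + pc f B.
Proof.
elim: A a => [|a' A IH] a /=.
  by case: B => [|b B] //=; rewrite addn0.
move: (IH a') => /= ->; lia.
Qed.

Lemma pre_last t : last 1 (pre t) = 0.
Proof.
elim/pind: t => [[|c ts]] IH //=.
have : forall x, last x (FF (c :: ts)) = 0.
  elim: ts c IH => [|c' ts IHl] c IH x.
    rewrite /FF /= cats0; move: (IH c (or_introl erefl)).
    by case: (pre c) => [|a A] //=.
  rewrite /FF /= last_cat.
  apply: (IHl c' (fun d h => IH d (or_intror h))).
by apply.
Qed.

Lemma pre_head t : exists A, pre t = (let: Node ts := t in size ts) :: A.
Proof. by case: t => ts; eexists. Qed.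

Definition Of a b := (0 < a) && (b == 0).
Definition Yf a b := (a == 0) && (b == 0).

Lemma pc_FF f c ts : pc f (FF (c :: ts)) =
  pc f (pre c) + (if ts is c' :: _ then f 0 (let: Node cs := c' in size cs) else 0) + pc f (FF ts).
Proof.
rewrite /FF /=; have [A eA] := pre_head c; rewrite eA pc_cat -eA.
have hl : last (let: Node ts0 := c in size ts0) A = 0.
  by have := pre_last c; rewrite eA.
rewrite hl; congr (_ + _ + _); case: ts => [|c' ts] //=.
by case: c' => cs /=.
Qed.

Lemma leaves_pc t : old_leaves t = pc Of (pre t) /\ young_leaves t = pc Yf (pre t).
Proof.
elim/pind: t => ts IH.
have hO : pc Of (FF ts) = sumn (map old_leaves ts).
  elim: ts IH => [|c ts IHl] IH //.
  rewrite pc_FF /= IHl; last by move=> d h; apply: IH; right.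
  rewrite (proj1 (IH c (or_introl erefl))).
  by case: ts {IHl IH} => [|c' ts] //=; rewrite /Of /= addn0.
have hY : pc Yf (FF ts) = count is_leafb (behead ts) + sumn (map young_leaves ts).
  clear hO; elim: ts IH => [|c ts IHl] IH //.
  rewrite pc_FF /= IHl; last by move=> d h; apply: IH; right.
  rewrite (proj2 (IH c (or_introl erefl))).
  case: ts {IHl IH} => [|c' ts] //=; first lia.
  case: c' => cs /=; rewrite /Yf /=; case: cs => //= *; lia.
case: ts IH hO hY => [|c ts] IH hO hY; first by [].
have [A eA] := pre_head c.
have eF : FF (c :: ts) = (let: Node cs := c in size cs) :: (A ++ FF ts) by rewrite /FF /= eA.
have -> : pre (Node (c :: ts)) = (size ts).+1 :: FF (c :: ts) by [].
have pcc : forall f a b s, pc f (a :: b :: s) = f a b + pc f (b :: s) by [].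
rewrite eF !pcc -eF hO hY.
clear IH eA eF hO hY.
by case: c => cs /=; rewrite /Of /Yf /=; case: cs.
Qed.

Lemma pc_idx f s : pc f s = count (fun j => f (nth 0 s j) (nth 0 s j.+1)) (iota 0 (size s).-1).
Proof.
elim: s => [|a s IH] //; case: s IH => [|b s] IH //.
have -> : pc f [:: a, b & s] = f a b + pc f (b :: s) by [].
rewrite IH /= -[1]/(1 + 0) iotaDl count_map.
by congr (_ + _); apply: eq_count => j /=; rewrite add1n.
Qed.

Definition mkperm n (f : 'I_n -> 'I_n) : 'S_n :=
  match injectiveP f with ReflectT h => perm h | ReflectF _ => 1%g end.

Lemma mkpermE n (f : 'I_n -> 'I_n) : injective f -> forall i, mkperm f i = f i.
Proof. by move=> fi i; rewrite /mkperm; case: injectiveP => h; [rewrite permE | exfalso]. Qed.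

Definition phi n T : 'S_n := mkperm (@bfun n (wD (pre T)) (vD n (pre T))).

Lemma phi_bperm n T (hd : dyck n (wD (pre T)) (vD n (pre T))) : phi n T = bperm hd.
Proof. by apply/permP => i; rewrite mkpermE ?permE //; apply: bfun_inj hd. Qed.

Lemma valid_pre n T : edges T = n ->
  [/\ valid n (pre T), size (pre T) = n.+1 & nth 0 (pre T) n = 0].
Proof.
move=> eT; have [sz sm] := pre_edges T; rewrite eT in sz sm.
have ln : nth 0 (pre T) n = 0.
  have := pre_last T; have := nth_last 0 (pre T); rewrite sz /=.
  by case: (pre T) => [|a A] //= ->.
split => //; split.
  have := S_S (pre T) n; rewrite ln /S take_oversize ?sz // sm; lia.
move=> t tn; have [_ h] := pre_code T; have := h t; rewrite sz; lia.
Qed.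

Unset Implicit Arguments.

Theorem mainTheorem12 (n : nat) (hn : 1 <= n) :
  exists phi : ptree -> 'S_n,
    [/\ (forall T, edges T = n -> avoids321 (phi T)),
        (forall T1 T2, edges T1 = n -> edges T2 = n -> phi T1 = phi T2 -> T1 = T2),
        (forall p : 'S_n, avoids321 p -> exists T, edges T = n /\ phi T = p)
      & (forall T, edges T = n ->
           young_leaves T = stat_young (phi T) /\ old_leaves T = stat_old (phi T))].
Proof.
exists (phi n); split.
- move=> T eT; have [v _ _] := valid_pre eT.
  rewrite (phi_bperm (dyck_D v)); exact: bperm_avoid.
- move=> T1 T2 e1 e2 eq.
  have [v1 s1 l1] := valid_pre e1; have [v2 s2 l2] := valid_pre e2.
  have h1 := dyck_D v1; have h2 := dyck_D v2.
  rewrite (phi_bperm h1) (phi_bperm h2) in eq.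
  have ew : forall j, j < n -> wD (pre T1) j = wD (pre T2) j.
    by move=> j jn; rewrite -(bperm_wexc h1 jn) -(bperm_wexc h2 jn) eq.
  have eb : forall i : 'I_n, build n (wD (pre T1)) (vD n (pre T1)) i =
                            build n (wD (pre T2)) (vD n (pre T2)) i.
    by move=> i; rewrite -!bpermE eq.
  have ev : forall v, v < n -> vD n (pre T1) v = vD n (pre T2) v.
    move=> v vn; rewrite (vm_recover h1 vn) (vm_recover h2 vn).
    by apply: eq_existsb => i; rewrite ew ?ltn_ord // eb.
  have eS := S_det v1 v2 ew ev.
  apply: pre_inj; apply: (@eq_from_nth _ 0); first by rewrite s1 s2.
  move=> j; rewrite s1 ltnS leq_eqVlt => /orP [/eqP -> | jn]; first by rewrite l1 l2.
  have := S_S (pre T1) j; have := S_S (pre T2) j; rewrite !eS //; [lia | exact: ltnW].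
- move=> p av; have hd := dyck_p av.
  have vD0 := valid_Dseq hd hn.
  have cd : code 1 (Dseq n (wP p) (vP p)).
    split.
      have := S_S (Dseq n (wP p) (vP p)) n.
      case: vD0 => -> _; rewrite nth_Dseq_n /S take_oversize ?size_Dseq // => ->.
      by rewrite addn0 addn1.
    by move=> t; rewrite size_Dseq => tn; case: vD0 => _ h; have := h t tn; lia.
  have [T eT] := code_tree cd.
  have eE : edges T = n.
    by have [sz _] := pre_edges T; move: sz; rewrite eT size_Dseq => -[].
  exists T; split => //.
  have [v _ _] := valid_pre eE.
  apply/permP => i; apply: val_inj.
  rewrite (phi_bperm (dyck_D v)) bpermE uniq_build //.
  apply: build_ext => //.
  + by move=> x xn; rewrite eT (wD_Dseq hd hn xn).
  + by move=> x xn; rewrite eT (vD_Dseq hd hn xn).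
- move=> T eT; have [v sz ln] := valid_pre eT; have hd := dyck_D v.
  rewrite (phi_bperm hd); have [lo ly] := leaves_pc T.
  have wx : forall j, j <= n -> wexc (bperm hd) j = wD (pre T) j.
    move=> j; rewrite leq_eqVlt => /orP [/eqP -> | jn]; last exact: bperm_wexc.
    by rewrite /wexc ltnn /wD ln.
  have df : forall j, j < n -> defic (bperm hd) j = ~~ wD (pre T) j.
    by move=> j jn; rewrite -wx ?(ltnW jn) // /defic /wexc jn -ltnNge.
  rewrite lo ly !pc_idx sz /=; split.
    rewrite /stat_young -{1}(prednK hn) -addn1 iotaD count_cat /= addn0.
    have nn : n.-1 < n by rewrite prednK.
    congr (_ + _).
      apply: eq_in_count => j; rewrite mem_iota add0n => /andP [_ jn].
      rewrite /Yf !eqn0Ngt -!df //; [lia | lia].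
    rewrite /Yf prednK // ln eqxx andbT eqn0Ngt -df //.
    by rewrite /defic nn.
  rewrite /stat_old; apply: eq_in_count => j; rewrite mem_iota add0n => /andP [_ jn].
  by rewrite /Of eqn0Ngt (wx j (ltnW jn)) (wx j.+1 jn).
Qed.
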